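(* Let $G$ be a simple graph on $n$ vertices, where $n$ is odd. Then $$\mathrm{HE}(G) < \frac{n}{2}\left(1+\sqrt{n}-\frac{1}{\sqrt{n}}\right).$$
   Context: All graphs are finite, simple and undirected. For a graph $G$ on $n$ vertices with adjacency matrix $A$, let $\lambda_1 \ge \lambda_2 \ge \cdots \ge \lambda_n$ be the eigenvalues of $A$ and $r := \lfloor n/2 \rfloor$. The Hückel energy of $G$ is $\mathrm{HE}(G) = 2\sum_{i=1}^{r}\lambda_i$ if $n=2r$, and $\mathrm{HE}(G) = 2\sum_{i=1}^{r}\lambda_i + \lambda_{r+1}$ if $n=2r+1$. *)

(* Defs.v *)
From HB Require Import structures.
From mathcomp Require Import all_boot all_order all_algebra all_field.
Set Implicit Arguments. Unset Strict Implicit. Unset Printing Implicit Defensive.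
Import Order.TTheory GRing.Theory Num.Theory.
Local Open Scope ring_scope.

Definition simple_graph (n : nat) (e : rel 'I_n) : Prop :=
  (forall i j, e i j = e j i) /\ (forall i, ~~ e i i).

Definition adj_mx (n : nat) (e : rel 'I_n) : 'M[algC]_n :=
  \matrix_(i, j) (e i j)%:R.

Definition eigenvalues (n : nat) (A : 'M[algC]_n) : seq algC :=
  sort (fun x y => y <= x) (sval (closed_field_poly_normal (char_poly A))).

(* Hückel energy: lam_1 >= ... >= lam_n, r = floor(n/2);
   HE = 2 * sum_{i=1}^r lam_i  (+ lam_{r+1} if n odd).  Indices 0-based. *)
Definition huckel_energy (n : nat) (e : rel 'I_n) : algC :=
  let s := eigenvalues (adj_mx e) in
  let r := n./2 in
  2 * (\sum_(i < r) s`_i) + (if odd n then s`_r else 0).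

(* Main.v *)
Require Import Defs.
From HB Require Import structures.
From mathcomp Require Import all_boot all_order all_algebra all_field.
From mathcomp Require Import ring.
Import Order.TTheory GRing.Theory Num.Theory.
Local Open Scope ring_scope.
Local Open Scope sesquilinear_scope.
From mathcomp Require Import lra zify.
Lemma parity_contra (n N : nat) : odd n ->
  (n ^ 3 + 4 * N * (n * (n - 1)) = 4 * N ^ 2 + (n * (n - 1)) ^ 2)%N -> False.
Proof.
move=> on /(congr1 odd); rewrite !oddD !oddM.
case: n on => // n' /= on'; rewrite subSS subn0 (negbTE on').
by case: (odd N).
Qed.

Lemma scalar (R : realFieldType) (n N : nat) (s a U Z : R) :
 (3 <= n)%N -> odd n -> 0 < s -> s^+2 = n%:R -> (N <= n*(n-1))%N -> N%:R <= n%:R * a ->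
 U^+2 <= (n%:R - 1 - 1 - (n%:R - 1)^-1) * Z ->
 Z = N%:R - a^+2 * n%:R / (n%:R - 1) ->
 U + a * n%:R / (n%:R - 1) < n%:R/2 * (1 + s - s^-1).
Proof.
move=> n3 on s0 hs hN hNa hU hZ.
have n3R : 3 <= n%:R :> R by rewrite (ler_nat R 3 n).
have hNR : N%:R <= n%:R * (n%:R - 1) :> R.
  have e : (n - 1)%:R = n%:R - 1 :> R by rewrite natrB //; case: (n) n3.
  by rewrite -e -natrM ler_nat.
set nr := n%:R : R in n3R hNR hNa hs hU hZ *.
set m := nr - 1.
have m2 : 2 <= m by rewrite /m; lra.
have mi : 0 < m^-1 <= 1/2.
  have mi0 : 0 < m^-1 by rewrite invr_gt0; lra.
  have hm : m * m^-1 = 1 by rewrite divff // gt_eqF //; lra.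
  apply/andP; split => //; nra.
set P := m - 1 - m^-1 in hU.
have P0 : 0 < P by rewrite /P; lra.
have Z0 : 0 <= Z.
  have : 0 <= P * Z by apply: le_trans hU; exact: sqr_ge0.
  by rewrite pmulr_rge0.
have am : a <= m.
  have h1 : a^+2 * nr / m <= nr * m.
    move: Z0; rewrite hZ; set tt := a^+2 * nr / m; set w := nr * m.
    have : N%:R <= w by [].
    lra.
  have h2 : a^+2 <= m^+2.
    move: h1; rewrite ler_pdivrMr; last lra.
    move=> h; rewrite -(ler_pM2l (_ : 0 < nr)); last lra.
    rewrite !expr2; nra.
  rewrite !expr2 in h2; nra.
have sn : s <= nr - 1.
  have hs' := hs; rewrite expr2 in hs'; nra.
set Rv := nr / 2 * (1 + s - s^-1).
have nRv : nr <= Rv.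
  rewrite /Rv; have si : s^-1 = s / nr.
    by rewrite -hs expr2 invfM mulrA divff ?mul1r // gt_eqF.
  rewrite si.
  have -> : nr / 2 * (1 + s - s / nr) = (nr + nr * s - s) / 2.
    by field; rewrite gt_eqF //; lra.
  rewrite ler_pdivlMr; last lra.
  nra.
rewrite ltNge; apply/negP => hge.
set v := Rv - a * nr / m.
have anm : a * nr / m <= nr.
  rewrite ler_pdivrMr; last lra.
  nra.
have v0 : 0 <= v by rewrite /v; lra.
have vU : v <= U by rewrite /v; lra.
have v2 : v^+2 <= P * Z.
  apply: le_trans hU; rewrite !expr2; nra.
set ast := (nr - 1 + s) / 2.
have iden : v^+2 - P * Z = nr * (a - ast)^+2 + P * (nr * a - N%:R).
  rewrite /v /Rv /P /m /ast hZ /m -hs.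
  field.
  by rewrite hs !gt_eqF //; lra.
have t1 : 0 <= nr * (a - ast)^+2 by apply: mulr_ge0; [lra| exact: sqr_ge0].
have t2 : 0 <= P * (nr * a - N%:R) by apply: mulr_ge0; lra.
have e2 : P * (nr * a - N%:R) = 0 by lra.
have eN : N%:R = nr * a.
  by move/eqP: e2; rewrite mulf_eq0 gt_eqF //= subr_eq0 => /eqP ->.
have e1 : nr * (a - ast)^+2 = 0 by lra.
have ea : a = ast.
  by move/eqP: e1; rewrite mulf_eq0 gt_eqF ?sqrf_eq0 ?subr_eq0 /=; [move/eqP|lra].
have key : nr^+3 + 4 * N%:R * (nr * (nr - 1)) = 4 * N%:R^+2 + (nr * (nr - 1))^+2.
  have e3 : nr * s = 2 * N%:R - nr * (nr - 1) by rewrite eN ea /ast; field.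
  have : (nr * s)^+2 = nr ^+3 by rewrite exprMn hs; ring.
  rewrite e3 => <-; ring.
apply: (@parity_contra n N on).
apply/eqP; rewrite -(eqr_nat R); apply/eqP.
rewrite !natrD !natrM natrB; last by case: (n) on.
rewrite -/nr; apply: (etrans _ (etrans key _)); ring.
Qed.
Lemma sumsq_affine (R : realFieldType) (p : seq R) (al be : R) :
  \sum_(z <- p) (al * z + be)^+2 =
  al^+2 * \sum_(z <- p) z^+2 + 2 * al * be * \sum_(z <- p) z + be^+2 * (size p)%:R.
Proof.
elim: p => [|z p IH]; first by rewrite !big_nil /=; ring.
rewrite !big_cons IH /= -natr1; ring.
Qed.

Lemma sum_sq_ge0 (R : realFieldType) (I : Type) (p : seq I) (F : I -> R) :
  0 <= \sum_(z <- p) (F z)^+2.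
Proof. by apply: sumr_ge0 => i _; exact: sqr_ge0. Qed.

Lemma block_cs (R : realFieldType) (k N : nat) (a q : R) (p t : seq R) :
  size p = k -> size t = k.+1 ->
  a + \sum_(z <- p) z + q + \sum_(z <- t) z = 0 ->
  a^+2 + \sum_(z <- p) z^+2 + q^+2 + \sum_(z <- t) z^+2 = N%:R ->
  forall (n : nat) (m U Z : R), n = (k.*2).+3 -> m = n%:R - 1 ->
  U = 2 * (a + \sum_(z <- p) z) + q - a * n%:R / m ->
  Z = N%:R - a^+2 * n%:R / m ->
  U^+2 <= (m - 1 - m^-1) * Z.
Proof.
move=> hp ht hs1 hs2 n m U Z hn hmdef hU hZ.
have m2 : 2 <= m.
  rewrite hmdef hn -addn3 natrD; have : 0 <= (k.*2)%:R :> R by [].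
  by move=> h; lra.
set P := m - 1 - m^-1.
have mi0 : 0 < m^-1 by rewrite invr_gt0; lra.
have hm : m * m^-1 = 1 by rewrite divff // gt_eqF //; lra.
have P0 : 0 < P by rewrite /P; nra.
set c := a / m.
set bp := P * c - U * (1 + m^-1).
set bt := P * c - U * (m^-1 - 1).
have iden : P * (P * Z - U^+2) = \sum_(z <- p) (P * z + bp)^+2 +
   \sum_(z <- t) (P * z + bt)^+2 + (P * (q + c) - U * m^-1)^+2.
  rewrite !sumsq_affine hp ht -natr1.
  set Sp := \sum_(z <- p) z in hs1 hs2 hU *.
  set St := \sum_(z <- t) z in hs1 hs2 *.
  set Sp2 := \sum_(z <- p) z^+2 in hs2 *.
  set St2 := \sum_(z <- t) z^+2 in hs2 *.
  have eSt : St = - (a + Sp + q) by lra.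
  have eSt2 : St2 = N%:R - a^+2 - Sp2 - q^+2 by lra.
  rewrite eSt eSt2 /bp /bt /P /c hZ.
  have hn' : n%:R = 2 * k%:R + 3 :> R by rewrite hn -addn3 natrD -muln2 natrM mulrC.
  rewrite hn' in hmdef hU *.
  rewrite hU hmdef.
  field.
  by rewrite -hmdef gt_eqF //; lra.
have key : 0 <= P * (P * Z - U^+2).
  by rewrite iden !addr_ge0 // ?sqr_ge0 // sum_sq_ge0.
by rewrite pmulr_rge0 // subr_ge0 in key.
Qed.

Lemma core (R : realFieldType) (n N : nat) (x : seq R) (s : R) :
 odd n -> size x = n -> 0 < s -> s^+2 = n%:R ->
 \sum_(z <- x) z = 0 -> \sum_(z <- x) z^+2 = N%:R -> N%:R <= n%:R * x`_0 ->
 (N <= n * (n - 1))%N ->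
 2 * (\sum_(i < n./2) x`_i) + x`_(n./2) < n%:R / 2 * (1 + s - s^-1).
Proof.
move=> on hsz s0 hs hs1 hs2 hNa hN.
case: x hsz hs1 hs2 hNa => [|a y] hsz hs1 hs2 hNa; first by rewrite -hsz in on.
rewrite big_cons in hs1; rewrite big_cons in hs2.
have [/size0nil y0|yn0] := eqVneq (size y) 0%N.
  rewrite y0 in hsz hs1 hs2 hNa *.
  rewrite -hsz /= big_ord0 mulr0 add0r.
  rewrite big_nil addr0 in hs1.
  rewrite -hsz /= in hs.
  have s1 : s = 1.
    have : (s - 1) * (s + 1) = 0.
      by rewrite expr2 in hs; rewrite mulrBl !mulrDr !mulr1 mul1r hs; ring.
    by move/eqP; rewrite mulf_eq0 => /orP [/eqP h|/eqP h]; lra.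
  by rewrite hs1 s1 invr1; lra.
have [k hk] : exists k, n = k.*2.+3.
  have e := odd_double_half n; rewrite on in e.
  move: e; case: (n./2) => [|h] e.
    by move: yn0; rewrite -e in hsz; case: (y) hsz.
  by exists h; rewrite -e doubleS.
have h2 : n./2 = k.+1 by rewrite hk -doubleS; exact: (half_bit_double k.+1 true).
have hy : size y = k.*2.+2 by move: hsz; rewrite hk /= => -[].
have ey : y = take k y ++ nth 0 y k :: drop k.+1 y.
  rewrite -drop_nth ?cat_take_drop // hy.
  lia.
set p := take k y in ey; set q := nth 0 y k in ey; set t := drop k.+1 y in ey.
have hp : size p = k by rewrite size_take hy; case: ifP => //; lia.
have ht : size t = k.+1.
  rewrite size_drop hy; lia.
rewrite ey in hs1 hs2 hNa.
rewrite big_cat big_cons /= in hs1.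
rewrite big_cat big_cons /= in hs2.
have hsum : \sum_(i < n./2) (a :: y)`_i = a + \sum_(z <- p) z.
  rewrite h2 big_ord_recl /=; congr (_ + _).
  rewrite (big_nth 0) hp big_mkord; apply: eq_bigr => i _.
  by rewrite add0n {1}ey nth_cat hp ltn_ord.
have hlast : (a :: y)`_(n./2) = q by rewrite h2 /= ey nth_cat hp ltnn subnn.
rewrite hsum hlast.
set m := n%:R - 1 : R.
have := @block_cs R k N a q p t hp ht _ _ n m _ _ hk erefl erefl erefl.
rewrite !addrA in hs1 hs2 => /(_ hs1 hs2) hcs.
have n3 : (3 <= n)%N by rewrite hk.
have := @scalar R n N s a _ _ n3 on s0 hs hN hNa hcs erefl.
by rewrite subrK.
Qed.
Lemma char_poly_simil (F : fieldType) n (P D : 'M[F]_n) : P \in unitmx ->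
  char_poly (invmx P *m D *m P) = char_poly D.
Proof.
move=> Pu; rewrite /char_poly /char_poly_mx.
set f := map_mx (@polyC F).
have fM : forall (A B : 'M[F]_n), f (A *m B) = f A *m f B by move=> A B; rewrite /f map_mxM.
have e : 'X%:M - f (invmx P *m D *m P) = f (invmx P) *m ('X%:M - f D) *m f P.
  rewrite !fM mulmxBr mulmxBl; congr (_ - _).
  by rewrite scalar_mxC -mulmxA -fM mulVmx // /f map_mx1 mulmx1.
rewrite e !det_mulmx mulrC mulrA -det_mulmx -fM mulmxV // /f map_mx1 det1 mul1r.
done.
Qed.

Lemma sorted_head_max (x : seq algC) : sorted (fun a b => b <= a) x ->
  forall z, z \in x -> z <= x`_0.
Proof.
case: x => [|a r] //= pth z; rewrite in_cons => /orP [/eqP->//|zr].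
have := order_path_min (fun b c d h1 h2 => le_trans h2 h1) pth.
by move/allP/(_ z zr).
Qed.

Lemma spec_facts n (e : rel 'I_n) : simple_graph e -> (0 < n)%N ->
  let x := eigenvalues (adj_mx e) in
  let N := (\sum_i \sum_j e i j)%N in
  [/\ size x = n, all (fun z => z \is Num.real) x, \sum_(z <- x) z = 0,
      \sum_(z <- x) z^+2 = N%:R & N%:R <= n%:R * x`_0].
Proof.
move=> [hsym hirr] n0 x N.
set A := adj_mx e.
have Asym : A \is symmetricmx.
  apply/is_hermitianmxP; rewrite expr0 scale1r; apply/matrixP => i j.
  by rewrite !mxE /= hsym.
have Areal : A \is a realmx by apply/mxOverP => i j; rewrite mxE realn.
have Aherm := realsym_hermsym Asym Areal.
have /orthomx_spectralP eA := hermitian_normalmx Aherm.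
set P := spectralmx A in eA; set d := spectral_diag A in eA.
have Pu : P \is unitarymx := spectral_unitarymx A.
have Punit : P \in unitmx := spectral_unit A.
have dreal : d \is a realmx := hermitian_spectral_diag_real Aherm.
set dl := [seq d 0 i | i <- enum 'I_n].
have cp : char_poly A = \prod_(z <- dl) ('X - z%:P).
  rewrite {1}eA char_poly_simil // char_poly_trig ?diag_mx_is_trig //.
  rewrite big_map big_enum /=; apply: eq_bigr => i _.
  by rewrite mxE eqxx mulr1n.
have pe : perm_eq x dl.
  rewrite /x /eigenvalues; case: closed_field_poly_normal => l /= hl.
  rewrite perm_sort; apply: prod_XsubC_eq.
  by rewrite -cp hl (monicP (char_poly_monic _)) scale1r.
have hsz : size x = n by rewrite (perm_size pe) size_map size_enum_ord.
have dlreal : forall z, z \in dl -> z \is Num.real.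
  by move=> z /mapP [i _ ->]; move/mxOverP: dreal; apply.
have xreal : forall z, z \in x -> z \is Num.real.
  by move=> z zx; apply: dlreal; rewrite -(perm_mem pe).
have PP : P^t* *m P = 1%:M.
  by rewrite -invmx_unitary // mulVmx.
have eA' : A = P^t* *m diag_mx d *m P by rewrite -invmx_unitary.
have PPt : P *m P^t* = 1%:M by apply/unitarymxP.
have trconj : forall M, \tr (P^t* *m M *m P) = \tr M.
  by move=> M; rewrite mxtrace_mulC mulmxA PPt mul1mx.
have sumd : \sum_(z <- x) z = \sum_i d 0 i.
  by rewrite (perm_big _ pe) big_map big_enum.
have sumd2 : \sum_(z <- x) z^+2 = \sum_i (d 0 i)^+2.
  by rewrite (perm_big _ pe) big_map big_enum.
have hsum : \sum_(z <- x) z = 0.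
  rewrite sumd -mxtrace_diag -trconj -eA'.
  by rewrite /mxtrace big1 // => i _; rewrite mxE (negbTE (hirr i)).
have hsum2 : \sum_(z <- x) z^+2 = N%:R.
  have eAA : A *m A = P^t* *m (diag_mx d *m diag_mx d) *m P.
    by rewrite eA' !mulmxA -[_ *m P *m P^t*]mulmxA PPt mulmx1.
  have tAA : \tr (A *m A) = \sum_i (d 0 i)^+2.
    rewrite eAA trconj mul_mx_diag /mxtrace; apply: eq_bigr => i _.
    by rewrite !mxE eqxx mulr1n expr2.
  rewrite sumd2 -tAA /N !natr_sum /mxtrace; apply: eq_bigr => i _.
  rewrite mxE natr_sum; apply: eq_bigr => j _.
  by rewrite !mxE (hsym j i); case: (e i j); rewrite ?mulr1 ?mulr0.
have srt : sorted (fun a b => b <= a) x.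
  rewrite /x /eigenvalues; apply: (sort_sorted_in (P := Num.real)).
    by move=> a b ha hb; rewrite orbC real_leVge.
  apply/allP => z zl; apply: xreal; by rewrite /x /eigenvalues mem_sort.
have xmax := @sorted_head_max x srt.
set w := const_mx 1 : 'rV[algC]_n.
set v := w *m P^t*.
have Pw : P *m w^T = v^t*.
  apply/matrixP => i j; rewrite !mxE rmorph_sum; apply: eq_bigr => k _.
  by rewrite !mxE rmorphM /= conjCK conjC1 mulr1 mul1r.
have e1 : w *m A *m w^T = v *m diag_mx d *m v^t*.
  by rewrite eA' !mulmxA -[_ *m P *m w^T]mulmxA Pw.
have e2 : w *m w^T = v *m v^t*.
  by rewrite -Pw /v mulmxA -[w *m P^t* *m P]mulmxA PP mulmx1.
have eN : N%:R = (w *m A *m w^T) 0 0.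
  rewrite /N natr_sum mxE.
  rewrite (eq_bigr (fun i => \sum_j ((e i j : nat)%:R : algC))); last first.
    by move=> i _; rewrite natr_sum.
  rewrite exchange_big; apply: eq_bigr => j _.
  rewrite !mxE mulr1; apply: eq_bigr => i _.
  by rewrite !mxE mul1r.
have en : n%:R = (w *m w^T) 0 0.
  rewrite mxE -[n in n%:R]card_ord -sumr_const; apply: eq_bigr => i _.
  by rewrite !mxE mulr1.
split => //.
  by apply/allP.
rewrite eN en e1 e2 -subr_ge0 !mxE mulr_suml -sumrB; apply: sumr_ge0 => k _.
rewrite mul_mx_diag !mxE.
set u := \sum_j w 0 j * (P ^t*) j k.
have -> : u * u^* * x`_0 - u * d 0 k * u^* = (x`_0 - d 0 k) * (u * u^*) by ring.
apply: mulr_ge0; last by rewrite mul_conjC_ge0.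
rewrite subr_ge0; apply: xmax; rewrite (perm_mem pe).
by apply: map_f; rewrite mem_enum.
Qed.

Lemma N_bound n (e : rel 'I_n) : (forall i, ~~ e i i) ->
  (\sum_i \sum_j e i j <= n * (n - 1))%N.
Proof.
move=> hirr; rewrite -[n in (n * _)%N]card_ord -sum_nat_const.
apply: leq_sum => i _.
rewrite (bigD1 i) //= (negbTE (hirr i)) add0n.
apply: leq_trans (_ : (\sum_(j | j != i) 1 <= _)%N).
  by apply: leq_sum => j _; exact: leq_b1.
rewrite sum1dep_card (_ : [set x | x != i] = [set~ i]); first by rewrite cardsC1 card_ord subn1.
by apply/setP => j; rewrite !inE.
Qed.

Lemma valD (a b : algR) : algRval (a + b) = algRval a + algRval b.
Proof. exact: rmorphD. Qed.
Lemma valB (a b : algR) : algRval (a - b) = algRval a - algRval b.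
Proof. exact: rmorphB. Qed.
Lemma valM (a b : algR) : algRval (a * b) = algRval a * algRval b.
Proof. exact: rmorphM. Qed.
Lemma valV (a : algR) : algRval (a^-1) = (algRval a)^-1.
Proof. exact: fmorphV. Qed.
Lemma valn (k : nat) : algRval k%:R = k%:R.
Proof. exact: rmorph_nat. Qed.
Lemma val1 : algRval 1 = 1.
Proof. exact: rmorph1. Qed.
Lemma valsum (k : nat) (F : 'I_k -> algR) :
  algRval (\sum_(i < k) F i) = \sum_(i < k) algRval (F i).
Proof. exact: rmorph_sum. Qed.

Theorem mainTheorem3 (n : nat) (e : rel 'I_n) :
  simple_graph e -> odd n ->
  huckel_energy e <
    (n%:R / 2) * (1 + sqrtC (n%:R) - (sqrtC (n%:R))^-1).
Proof.
move=> hsimple on.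
have n0 : (0 < n)%N by case: (n) on.
have [hsz hreal hs1 hs2 hNa] := @spec_facts n e hsimple n0.
have hN := @N_bound n e (proj2 hsimple).
rewrite /huckel_energy on.
set x := eigenvalues (adj_mx e) in hsz hreal hs1 hs2 hNa *.
set N := (\sum_i \sum_j e i j)%N in hs2 hNa hN.
set xr := map (insubd (0 : algR)) x.
have xv : map algRval xr = x.
  rewrite -map_comp; apply: map_id_in => z hz /=.
  by rewrite insubdK //; move/allP: hreal; apply.
have nthv : forall i, algRval (xr`_i) = x`_i.
  move=> i; case: (ltnP i (size xr)) => h.
    by rewrite -xv (nth_map (0:algR) _ _ h).
  by rewrite !nth_default // -xv size_map.
have sreal : sqrtC (n%:R : algC) \is Num.real.
  by apply: ger0_real; rewrite sqrtC_ge0 ler0n.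
set sR := insubd (0 : algR) (sqrtC (n%:R : algC)).
have sv : algRval sR = sqrtC n%:R by rewrite insubdK.
have s0 : 0 < sR.
  by change (algRval 0 < algRval sR); rewrite sv /= sqrtC_gt0 ltr0n.
have hs : sR ^+ 2 = n%:R.
  apply: val_inj; change (algRval (sR ^+ 2) = algRval n%:R).
  rewrite rmorphXn; change (algRval sR ^+ 2 = algRval n%:R). rewrite sv sqrtCK. by rewrite rmorph_nat.
have hszr : size xr = n by rewrite size_map.
have hs1r : \sum_(z <- xr) z = 0.
  apply: val_inj; change (algRval (\sum_(z <- xr) z) = algRval 0).
  by rewrite rmorph_sum -(big_map algRval xpredT id) xv hs1 rmorph0.
have hs2r : \sum_(z <- xr) z^+2 = N%:R.
  apply: val_inj; change (algRval (\sum_(z <- xr) z^+2) = algRval N%:R).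
  rewrite rmorph_sum rmorph_nat -hs2 -[in RHS]xv (big_map algRval xpredT (fun z => z^+2)).
  by apply: eq_bigr => z _; rewrite rmorphXn.
have hNar : (N%:R : algR) <= n%:R * xr`_0.
  by change (algRval N%:R <= algRval (n%:R * xr`_0)); rewrite rmorphM /= !rmorph_nat nthv.
have := @core _ n N xr sR on hszr s0 hs hs1r hs2r hNar hN.
move=> H; change (is_true (algRval (2 * (\sum_(i < n./2) xr`_i) + xr`_(n./2)) <
   algRval (n%:R / 2 * (1 + sR - sR^-1)))) in H.
have eL : algRval (2 * (\sum_(i < n./2) xr`_i) + xr`_(n./2)) =
    2 * (\sum_(i < n./2) x`_i) + x`_(n./2).
  rewrite (valD (2 * _)) (valM 2) valsum nthv (valn 2).
  by under eq_bigr do rewrite nthv.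
have eR : algRval (n%:R / 2 * (1 + sR - sR^-1)) =
    n%:R / 2 * (1 + sqrtC n%:R - (sqrtC n%:R)^-1).
  rewrite (valM (n%:R / 2)) (valM n%:R) (valV 2) (valB (1 + sR)) (valD 1) valV val1 sv (valn n) valD val1 sv.
  by [].
by move: H; rewrite eL eR.
Qed.
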